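(* Let $N\ge 2$, let $\rho$ be a density matrix on $\mathbb{C}^N$ and let $n\ge 1$ be an integer. Then $\mathcal{C}(\rho^{\otimes n})\le n\,\mathcal{C}(\rho)$, where $\mathcal{C}(\rho^{\otimes n})$ is computed on the $N^n$-dimensional space $(\mathbb{C}^N)^{\otimes n}$ (so with reference state $\mathbb{I}/N^n=\mathcal{I}^{\otimes n}$ and normalization $1/\log_2(N^n)$).
   Context: For a density matrix $\rho$ (positive semidefinite, trace one) on an $N$-dimensional Hilbert space $\mathcal{H}_N$, $N\ge 2$, let $\mathcal{I}=\mathbb{I}/N$ denote the normalized maximally mixed state. The von Neumann entropy is $S(\rho)=-\mathrm{Tr}[\rho\log_2\rho]$ (with $0\log 0=0$), and the trace distance to $\mathcal{I}$ is $D(\rho,\mathcal{I})=\tfrac12\mathrm{Tr}\sqrt{(\rho-\mathcal{I})^2}=\tfrac12\|\rho-\mathcal{I}\|_1$. The Quantum Statistical Complexity Measure (QSCM) is $\mathcal{C}(\rho)=\frac{1}{\log_2 N}\,S(\rho)\,D(\rho,\mathcal{I})$, where $N$ is the dimension of the space on which $\rho$ acts. *)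

(* Defs.v *)
From Stdlib Require Import Reals Lra Lia ClassicalEpsilon.
Open Scope R_scope.

Record C := mkC { Cre : R ; Cim : R }.
Definition RtoC (x : R) : C := mkC x 0.
Definition C0 : C := RtoC 0.
Definition C1 : C := RtoC 1.
Definition Cadd (a b : C) : C := mkC (Cre a + Cre b) (Cim a + Cim b).
Definition Copp (a : C) : C := mkC (- Cre a) (- Cim a).
Definition Cmul (a b : C) : C :=
  mkC (Cre a * Cre b - Cim a * Cim b) (Cre a * Cim b + Cim a * Cre b).
Definition Cconj (a : C) : C := mkC (Cre a) (- Cim a).

Fixpoint Csum (n : nat) (f : nat -> C) : C :=
  match n with
  | O => C0
  | S k => Cadd (Csum k f) (f k)
  end.

(* ---------- square matrices ----------
   A matrix is a function nat -> nat -> C; its dimension n is passed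
   explicitly and only entries with indices < n are meaningful. *)
Definition Mat := nat -> nat -> C.

Definition Meq (n : nat) (A B : Mat) : Prop :=
  forall i j, (i < n)%nat -> (j < n)%nat -> A i j = B i j.
Definition Mid : Mat := fun i j => if Nat.eqb i j then C1 else C0.
Definition Madd (A B : Mat) : Mat := fun i j => Cadd (A i j) (B i j).
Definition Msub (A B : Mat) : Mat := fun i j => Cadd (A i j) (Copp (B i j)).
Definition Mscale (c : C) (A : Mat) : Mat := fun i j => Cmul c (A i j).
Definition Mmul (n : nat) (A B : Mat) : Mat :=
  fun i j => Csum n (fun k => Cmul (A i k) (B k j)).
Definition Madj (A : Mat) : Mat := fun i j => Cconj (A j i).
Definition Mtrace (n : nat) (A : Mat) : C := Csum n (fun i => A i i).
Definition Mdiag (lam : nat -> R) : Mat :=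
  fun i j => if Nat.eqb i j then RtoC (lam i) else C0.

Definition unitary (n : nat) (U : Mat) : Prop :=
  Meq n (Mmul n (Madj U) U) Mid /\ Meq n (Mmul n U (Madj U)) Mid.

Definition density (n : nat) (rho : Mat) : Prop :=
  Meq n (Madj rho) rho /\
  (forall v : nat -> C,
     0 <= Cre (Csum n (fun i => Csum n (fun j =>
                 Cmul (Cconj (v i)) (Cmul (rho i j) (v j)))))) /\
  Mtrace n rho = C1.

(* Kronecker product of an m x m matrix A and an n x n matrix B,
   index (a, b) <-> a * n + b *)
Definition kron (n : nat) (A B : Mat) : Mat :=
  fun i j => Cmul (A (i / n)%nat (j / n)%nat) (B (i mod n)%nat (j mod n)%nat).

Fixpoint tpow (N : nat) (k : nat) (rho : Mat) : Mat :=
  match k with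
  | O => Mid
  | S k' => kron N (tpow N k' rho) rho
  end.

Definition is_mfun (n : nat) (f : R -> R) (A B : Mat) : Prop :=
  exists (U : Mat) (lam : nat -> R),
    unitary n U /\
    Meq n A (Mmul n (Mmul n U (Mdiag lam)) (Madj U)) /\
    Meq n B (Mmul n (Mmul n U (Mdiag (fun i => f (lam i)))) (Madj U)).

Definition mfun (n : nat) (f : R -> R) (A : Mat) : Mat :=
  epsilon (inhabits Mid) (fun B => is_mfun n f A B).

Definition log2 (x : R) : R := ln x / ln 2.

Definition eta (t : R) : R := if Req_EM_T t 0 then 0 else - (t * log2 t).

(* von Neumann entropy S(rho) = - Tr[rho log2 rho] = Tr[eta(rho)] *)
Definition vN_entropy (n : nat) (rho : Mat) : R :=
  Cre (Mtrace n (mfun n eta rho)).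

Definition maxmixed (n : nat) : Mat := Mscale (RtoC (/ INR n)) Mid.

Definition trace_dist (n : nat) (rho sigma : Mat) : R :=
  / 2 * Cre (Mtrace n (mfun n sqrt
                (Mmul n (Msub rho sigma) (Msub rho sigma)))).

Definition QSCM (n : nat) (rho : Mat) : R :=
  / log2 (INR n) * vN_entropy n rho * trace_dist n rho (maxmixed n).

(* Main.v *)
From Stdlib Require Import Reals Lra Lia ClassicalEpsilon FunctionalExtensionality.
Require Import Defs.
From mathcomp Require ssreflect ssrfun ssrbool eqtype ssrnat seq choice fintype bigop ssralg zmodp ssrnum matrix mxalgebra sesquilinear spectral complex Rstruct.
Open Scope R_scope.


Lemma Ceq (a b : C) : Cre a = Cre b -> Cim a = Cim b -> a = b.
Proof. destruct a, b; simpl; intros; subst; reflexivity. Qed.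

Ltac Csimpl := unfold Cadd, Cmul, Copp, Cconj, C0, C1, RtoC in *; simpl in *.
Ltac Csolve := intros; apply Ceq; Csimpl; ring.

Lemma Cadd_comm a b : Cadd a b = Cadd b a. Proof. Csolve. Qed.
Lemma Cadd_assoc a b c : Cadd (Cadd a b) c = Cadd a (Cadd b c). Proof. Csolve. Qed.
Lemma Cadd_0_l a : Cadd C0 a = a. Proof. Csolve. Qed.
Lemma Cadd_0_r a : Cadd a C0 = a. Proof. Csolve. Qed.
Lemma Cmul_comm a b : Cmul a b = Cmul b a. Proof. Csolve. Qed.
Lemma Cmul_assoc a b c : Cmul (Cmul a b) c = Cmul a (Cmul b c). Proof. Csolve. Qed.
Lemma Cmul_0_l a : Cmul C0 a = C0. Proof. Csolve. Qed.
Lemma Cmul_0_r a : Cmul a C0 = C0. Proof. Csolve. Qed.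
Lemma Cmul_1_l a : Cmul C1 a = a. Proof. Csolve. Qed.
Lemma Cmul_1_r a : Cmul a C1 = a. Proof. Csolve. Qed.
Lemma Cmul_add_l a b c : Cmul (Cadd a b) c = Cadd (Cmul a c) (Cmul b c). Proof. Csolve. Qed.
Lemma Cmul_add_r a b c : Cmul c (Cadd a b) = Cadd (Cmul c a) (Cmul c b). Proof. Csolve. Qed.
Lemma Cconj_add a b : Cconj (Cadd a b) = Cadd (Cconj a) (Cconj b). Proof. Csolve. Qed.
Lemma Cconj_mul a b : Cconj (Cmul a b) = Cmul (Cconj a) (Cconj b). Proof. Csolve. Qed.
Lemma Cconj_conj a : Cconj (Cconj a) = a. Proof. Csolve. Qed.
Lemma Cconj_0 : Cconj C0 = C0. Proof. Csolve. Qed.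

Lemma Csum_ext n f g : (forall i, (i < n)%nat -> f i = g i) -> Csum n f = Csum n g.
Proof.
  induction n; simpl; intros H; [reflexivity|].
  rewrite IHn by (intros; apply H; lia). rewrite H by lia. reflexivity.
Qed.

Lemma Csum_add n f g : Csum n (fun i => Cadd (f i) (g i)) = Cadd (Csum n f) (Csum n g).
Proof.
  induction n; simpl; [Csolve|]. rewrite IHn.
  generalize (Csum n f) (Csum n g) (f n) (g n). Csolve.
Qed.

Lemma Csum_mul_l n c f : Csum n (fun i => Cmul c (f i)) = Cmul c (Csum n f).
Proof.
  induction n; simpl; [Csolve|]. rewrite IHn. generalize (Csum n f) (f n). Csolve.
Qed.

Lemma Csum_mul_r n c f : Csum n (fun i => Cmul (f i) c) = Cmul (Csum n f) c.
Proof.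
  induction n; simpl; [Csolve|]. rewrite IHn. generalize (Csum n f) (f n). Csolve.
Qed.

Lemma Csum_conj n f : Cconj (Csum n f) = Csum n (fun i => Cconj (f i)).
Proof.
  induction n; simpl; [Csolve|]. rewrite <- IHn. apply Cconj_add.
Qed.

Lemma Csum_zero n f : (forall i, (i < n)%nat -> f i = C0) -> Csum n f = C0.
Proof.
  induction n; simpl; intros H; [reflexivity|].
  rewrite IHn by (intros; apply H; lia). rewrite H by lia. Csolve.
Qed.

Lemma Csum_swap m n f :
  Csum m (fun i => Csum n (fun j => f i j)) = Csum n (fun j => Csum m (fun i => f i j)).
Proof.
  induction m; simpl.
  - symmetry. apply Csum_zero. reflexivity.
  - rewrite IHm. rewrite <- Csum_add. reflexivity.
Qed.

Lemma Csum_app p q f : Csum (p + q) f = Cadd (Csum p f) (Csum q (fun b => f (p + b)%nat)).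
Proof.
  induction q; simpl.
  - rewrite Nat.add_0_r. Csolve.
  - rewrite Nat.add_succ_r. simpl. rewrite IHq. apply Cadd_assoc.
Qed.

Lemma Csum_split m n f :
  Csum (m * n) f = Csum m (fun a => Csum n (fun b => f (a * n + b)%nat)).
Proof.
  induction m; simpl; [reflexivity|].
  replace (n + m * n)%nat with (m * n + n)%nat by lia.
  rewrite Csum_app, IHm. reflexivity.
Qed.

Lemma Csum_delta n k f : (k < n)%nat ->
  Csum n (fun i => if Nat.eqb i k then f i else C0) = f k.
Proof.
  induction n; intros Hk; [lia|]. simpl.
  destruct (Nat.eq_dec k n).
  - subst. rewrite Nat.eqb_refl. rewrite Csum_zero. Csolve.
    intros i Hi. destruct (Nat.eqb_spec i n); [lia|reflexivity].
  - rewrite IHn by lia. destruct (Nat.eqb_spec n k); [lia|]. Csolve.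
Qed.

Lemma Csum_delta' n k f : (k < n)%nat ->
  Csum n (fun i => if Nat.eqb k i then f i else C0) = f k.
Proof.
  intros Hk. rewrite <- (Csum_delta n k f Hk). apply Csum_ext. intros i _.
  rewrite Nat.eqb_sym. reflexivity.
Qed.

Fixpoint Rsum (n : nat) (f : nat -> R) : R :=
  match n with O => 0 | S k => Rsum k f + f k end.

Lemma Rsum_ext n f g : (forall i, (i < n)%nat -> f i = g i) -> Rsum n f = Rsum n g.
Proof.
  induction n; simpl; intros H; [reflexivity|].
  rewrite IHn by (intros; apply H; lia). rewrite H by lia. reflexivity.
Qed.

Lemma Cre_Csum n f : Cre (Csum n f) = Rsum n (fun i => Cre (f i)).
Proof. induction n; simpl; [reflexivity|]. rewrite IHn. reflexivity. Qed.

Lemma Rsum_add n f g : Rsum n (fun i => f i + g i) = Rsum n f + Rsum n g.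
Proof. induction n; simpl; [ring|]. rewrite IHn. ring. Qed.

Lemma Rsum_scal_l n c f : Rsum n (fun i => c * f i) = c * Rsum n f.
Proof. induction n; simpl; [ring|]. rewrite IHn. ring. Qed.

Lemma Rsum_scal_r n c f : Rsum n (fun i => f i * c) = Rsum n f * c.
Proof. induction n; simpl; [ring|]. rewrite IHn. ring. Qed.

Lemma Rsum_le n f g : (forall i, (i < n)%nat -> f i <= g i) -> Rsum n f <= Rsum n g.
Proof.
  induction n; simpl; intros H; [lra|].
  assert (Rsum n f <= Rsum n g) by (apply IHn; intros; apply H; lia).
  assert (f n <= g n) by (apply H; lia). lra.
Qed.

Lemma Rsum_nonneg n f : (forall i, (i < n)%nat -> 0 <= f i) -> 0 <= Rsum n f.
Proof.
  intros H. replace 0 with (Rsum n (fun _ => 0)).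
  - apply Rsum_le. assumption.
  - clear H; induction n; simpl; [reflexivity|]. rewrite IHn; ring.
Qed.

Lemma Rsum_const n c : Rsum n (fun _ => c) = INR n * c.
Proof. induction n; simpl Rsum; [simpl; ring|]. rewrite IHn, S_INR. ring. Qed.

Lemma Rsum_term n f k : (forall i, (i < n)%nat -> 0 <= f i) -> (k < n)%nat -> f k <= Rsum n f.
Proof.
  induction n; intros H Hk; [lia|]. simpl.
  assert (0 <= Rsum n f) by (apply Rsum_nonneg; intros; apply H; lia).
  destruct (Nat.eq_dec k n).
  - subst. lra.
  - assert (f k <= Rsum n f) by (apply IHn; [intros; apply H; lia| lia]).
    assert (0 <= f n) by (apply H; lia). lra.
Qed.

Lemma Rsum_app p q f : Rsum (p + q) f = Rsum p f + Rsum q (fun b => f (p + b)%nat).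
Proof.
  induction q; simpl.
  - rewrite Nat.add_0_r. ring.
  - rewrite Nat.add_succ_r. simpl. rewrite IHq. ring.
Qed.

Lemma Rsum_split m n f :
  Rsum (m * n) f = Rsum m (fun a => Rsum n (fun b => f (a * n + b)%nat)).
Proof.
  induction m; simpl; [reflexivity|].
  replace (n + m * n)%nat with (m * n + n)%nat by lia.
  rewrite Rsum_app, IHm. reflexivity.
Qed.

Lemma Rsum_swap m n f :
  Rsum m (fun i => Rsum n (fun j => f i j)) = Rsum n (fun j => Rsum m (fun i => f i j)).
Proof.
  induction m; simpl.
  - clear. induction n; simpl; [reflexivity|]. rewrite <- IHn; ring.
  - rewrite IHm. rewrite <- Rsum_add. reflexivity.
Qed.


Lemma Mmul_assoc n A B D : Mmul n (Mmul n A B) D = Mmul n A (Mmul n B D).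
Proof.
  apply functional_extensionality; intro i; apply functional_extensionality; intro j.
  unfold Mmul.
  transitivity (Csum n (fun k => Csum n (fun l => Cmul (A i l) (Cmul (B l k) (D k j))))).
  - apply Csum_ext; intros k _. rewrite <- Csum_mul_r. apply Csum_ext; intros l _.
    apply Cmul_assoc.
  - rewrite Csum_swap. apply Csum_ext; intros l _. rewrite <- Csum_mul_l. reflexivity.
Qed.

Lemma Meq_refl n A : Meq n A A.
Proof. intros i j _ _; reflexivity. Qed.
Lemma Meq_sym n A B : Meq n A B -> Meq n B A.
Proof. intros H i j Hi Hj; symmetry; auto. Qed.
Lemma Meq_trans n A B D : Meq n A B -> Meq n B D -> Meq n A D.
Proof. intros H1 H2 i j Hi Hj; rewrite H1; auto. Qed.

Lemma Meq_mul n A A' B B' : Meq n A A' -> Meq n B B' -> Meq n (Mmul n A B) (Mmul n A' B').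
Proof.
  intros H1 H2 i j Hi Hj. unfold Mmul. apply Csum_ext; intros k Hk.
  rewrite H1, H2 by assumption. reflexivity.
Qed.

Lemma Meq_adj n A B : Meq n A B -> Meq n (Madj A) (Madj B).
Proof. intros H i j Hi Hj. unfold Madj. rewrite H by assumption. reflexivity. Qed.

Lemma Madj_mul n A B : Madj (Mmul n A B) = Mmul n (Madj B) (Madj A).
Proof.
  apply functional_extensionality; intro i; apply functional_extensionality; intro j.
  unfold Madj, Mmul. rewrite Csum_conj. apply Csum_ext; intros k _.
  rewrite Cconj_mul, Cmul_comm. reflexivity.
Qed.

Lemma Madj_adj A : Madj (Madj A) = A.
Proof.
  apply functional_extensionality; intro i; apply functional_extensionality; intro j.
  unfold Madj. apply Cconj_conj.
Qed.

Lemma Mmul_id_l n A : Meq n (Mmul n Mid A) A.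
Proof.
  intros i j Hi Hj. unfold Mmul, Mid.
  rewrite <- (Csum_delta' n i (fun k => A k j) Hi). apply Csum_ext; intros k _.
  destruct (Nat.eqb i k); [apply Cmul_1_l|apply Cmul_0_l].
Qed.

Lemma Mmul_id_r n A : Meq n (Mmul n A Mid) A.
Proof.
  intros i j Hi Hj. unfold Mmul, Mid.
  rewrite <- (Csum_delta n j (fun k => A i k) Hj). apply Csum_ext; intros k _.
  destruct (Nat.eqb k j); [apply Cmul_1_r|apply Cmul_0_r].
Qed.

Definition sdec (n : nat) (A U : Mat) (lam : nat -> R) : Prop :=
  unitary n U /\ Meq n A (Mmul n (Mmul n U (Mdiag lam)) (Madj U)).

Lemma UDU_entry n U lam i j :
  Mmul n (Mmul n U (Mdiag lam)) (Madj U) i j =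
  Csum n (fun k => Cmul (Cmul (U i k) (RtoC (lam k))) (Cconj (U j k))).
Proof.
  unfold Mmul at 1. apply Csum_ext; intros k Hk. f_equal.
  unfold Mmul, Mdiag.
  rewrite <- (Csum_delta n k (fun l => Cmul (U i l) (RtoC (lam l))) Hk).
  apply Csum_ext; intros l _. destruct (Nat.eqb l k); [reflexivity| apply Cmul_0_r].
Qed.

Lemma Mtrace_Meq n A B : Meq n A B -> Mtrace n A = Mtrace n B.
Proof. intros H. unfold Mtrace. apply Csum_ext; intros; apply H; auto. Qed.

Definition cnorm2 (a : C) : R := Cre a * Cre a + Cim a * Cim a.

Lemma cnorm2_nonneg a : 0 <= cnorm2 a.
Proof. unfold cnorm2. nra. Qed.

Lemma trace_UDU n U lam : unitary n U ->
  Cre (Mtrace n (Mmul n (Mmul n U (Mdiag lam)) (Madj U))) = Rsum n lam.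
Proof.
  intros [HU _]. unfold Mtrace.
  rewrite (Csum_ext n _ (fun i => Csum n (fun k => Cmul (Cmul (U i k) (RtoC (lam k))) (Cconj (U i k)))))
    by (intros; apply UDU_entry).
  rewrite Csum_swap.
  rewrite (Csum_ext n _ (fun k => Cmul (RtoC (lam k)) (Mmul n (Madj U) U k k))).
  - rewrite Cre_Csum. apply Rsum_ext; intros k Hk. rewrite HU by assumption.
    unfold Mid. rewrite Nat.eqb_refl. Csimpl. ring.
  - intros k _. unfold Mmul, Madj. rewrite <- Csum_mul_l. apply Csum_ext; intros i _.
    generalize (U i k). Csolve.
Qed.


Lemma Mmul_diag_r n W lam i j : (j < n)%nat -> Mmul n W (Mdiag lam) i j = Cmul (W i j) (RtoC (lam j)).
Proof.
  intros Hj. unfold Mmul, Mdiag.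
  rewrite <- (Csum_delta n j (fun k => Cmul (W i k) (RtoC (lam k))) Hj).
  apply Csum_ext; intros k _. destruct (Nat.eqb k j); [reflexivity|apply Cmul_0_r].
Qed.

Lemma Mmul_diag_l n W lam i j : (i < n)%nat -> Mmul n (Mdiag lam) W i j = Cmul (RtoC (lam i)) (W i j).
Proof.
  intros Hi. unfold Mmul, Mdiag.
  rewrite <- (Csum_delta' n i (fun k => Cmul (RtoC (lam k)) (W k j)) Hi).
  apply Csum_ext; intros k _. destruct (Nat.eqb_spec i k); [subst; reflexivity|apply Cmul_0_l].
Qed.

Lemma Meq_mul_l n A B B' : Meq n B B' -> Meq n (Mmul n A B) (Mmul n A B').
Proof. intros; apply Meq_mul; [apply Meq_refl|assumption]. Qed.
Lemma Meq_mul_r n A A' B : Meq n A A' -> Meq n (Mmul n A B) (Mmul n A' B).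
Proof. intros; apply Meq_mul; [assumption|apply Meq_refl]. Qed.

Lemma cancel_pair n X Y Z : Meq n (Mmul n X Y) Mid -> Meq n (Mmul n X (Mmul n Y Z)) Z.
Proof.
  intros H. rewrite <- Mmul_assoc. eapply Meq_trans; [apply Meq_mul_r; exact H|].
  apply Mmul_id_l.
Qed.

Lemma uniq_spec n A U lam V mu f : sdec n A U lam -> sdec n A V mu ->
  Rsum n (fun i => f (lam i)) = Rsum n (fun i => f (mu i)).
Proof.
  intros [[HU1 HU2] HA] [[HV1 HV2] HB].
  set (W := Mmul n (Madj V) U).
  set (X := Mmul n (Mmul n (Madj V) A) U).
  assert (E1 : Meq n X (Mmul n W (Mdiag lam))).
  { unfold X, W. eapply Meq_trans. apply Meq_mul_r. apply Meq_mul_l. exact HA.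
    rewrite !Mmul_assoc. apply Meq_mul_l. apply Meq_mul_l.
    eapply Meq_trans. apply Meq_mul_l. exact HU1. apply Mmul_id_r. }
  assert (E2 : Meq n X (Mmul n (Mdiag mu) W)).
  { unfold X, W. eapply Meq_trans. apply Meq_mul_r. apply Meq_mul_l. exact HB.
    rewrite !Mmul_assoc. apply cancel_pair. exact HV1. }
  assert (Hc : forall i j, (i < n)%nat -> (j < n)%nat ->
     Cmul (W i j) (RtoC (lam j)) = Cmul (RtoC (mu i)) (W i j)).
  { intros i j Hi Hj. rewrite <- (Mmul_diag_r n W lam i j Hj), <- (Mmul_diag_l n W mu i j Hi).
    rewrite <- E1, <- E2 by assumption. reflexivity. }
  assert (Hr : forall i j, (i < n)%nat -> (j < n)%nat ->
     cnorm2 (W i j) * f (mu i) = cnorm2 (W i j) * f (lam j)).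
  { intros i j Hi Hj. specialize (Hc i j Hi Hj).
    assert (Hre : Cre (Cmul (Cconj (W i j)) (Cmul (W i j) (RtoC (lam j)))) =
                  Cre (Cmul (Cconj (W i j)) (Cmul (RtoC (mu i)) (W i j)))) by (rewrite Hc; reflexivity).
    revert Hre. unfold cnorm2. generalize (W i j). intros [a b]. Csimpl. intros Hre.
    destruct (Req_dec (a*a+b*b) 0) as [Hz|Hz].
    - rewrite Hz. ring.
    - assert (lam j = mu i).
      { apply Rmult_eq_reg_l with (a*a+b*b); [|exact Hz]. nra. }
      rewrite H. reflexivity. }
  assert (Hrow : forall i, (i < n)%nat -> Rsum n (fun j => cnorm2 (W i j)) = 1).
  { intros i Hi.
    assert (HW : Meq n (Mmul n W (Madj W)) Mid).
    { unfold W. rewrite Madj_mul, Madj_adj. rewrite !Mmul_assoc.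
      eapply Meq_trans. apply Meq_mul_l. apply cancel_pair. exact HU2. exact HV1. }
    specialize (HW i i Hi Hi). unfold Mid in HW. rewrite Nat.eqb_refl in HW.
    apply (f_equal Cre) in HW. unfold Mmul in HW. rewrite Cre_Csum in HW.
    change 1 with (Cre C1). rewrite <- HW. apply Rsum_ext; intros j _. unfold Madj, cnorm2. generalize (W i j).
    intros [a b]; Csimpl; ring. }
  assert (Hcol : forall j, (j < n)%nat -> Rsum n (fun i => cnorm2 (W i j)) = 1).
  { intros j Hj.
    assert (HW : Meq n (Mmul n (Madj W) W) Mid).
    { unfold W. rewrite Madj_mul, Madj_adj. rewrite !Mmul_assoc.
      eapply Meq_trans. apply Meq_mul_l. apply cancel_pair. exact HV2. exact HU1. }
    specialize (HW j j Hj Hj). unfold Mid in HW. rewrite Nat.eqb_refl in HW.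
    apply (f_equal Cre) in HW. unfold Mmul in HW. rewrite Cre_Csum in HW.
    change 1 with (Cre C1). rewrite <- HW. apply Rsum_ext; intros i _. unfold Madj, cnorm2. generalize (W i j).
    intros [a b]; Csimpl; ring. }
  transitivity (Rsum n (fun j => Rsum n (fun i => cnorm2 (W i j) * f (lam j)))).
  - apply Rsum_ext; intros j Hj. rewrite Rsum_scal_r, Hcol by assumption. ring.
  - rewrite <- Rsum_swap. apply Rsum_ext; intros i Hi.
    rewrite (Rsum_ext n _ (fun j => cnorm2 (W i j) * f (mu i))).
    + rewrite Rsum_scal_r, Hrow by assumption. ring.
    + intros j Hj. symmetry. apply Hr; assumption.
Qed.

Lemma mfun_trace n f A U lam : sdec n A U lam ->
  Cre (Mtrace n (mfun n f A)) = Rsum n (fun i => f (lam i)).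
Proof.
  intros Hs.
  assert (Hex : exists B, is_mfun n f A B).
  { exists (Mmul n (Mmul n U (Mdiag (fun i => f (lam i)))) (Madj U)).
    exists U, lam. destruct Hs as [HU HA]. split; [exact HU|split; [exact HA|apply Meq_refl]]. }
  pose proof (epsilon_spec (inhabits Mid) (fun B => is_mfun n f A B) Hex) as Hm.
  fold (mfun n f A) in Hm.
  destruct Hm as [V [mu [HV [HA HB]]]].
  rewrite (Mtrace_Meq _ _ _ HB). rewrite trace_UDU by assumption.
  symmetry. apply (uniq_spec n A U lam V mu f Hs). split; assumption.
Qed.


Lemma divmod_div n a b : (b < n)%nat -> ((a * n + b) / n)%nat = a.
Proof. intros. symmetry. apply (Nat.div_unique _ _ _ b); lia. Qed.
Lemma divmod_mod n a b : (b < n)%nat -> ((a * n + b) mod n)%nat = b.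
Proof. intros. symmetry. apply (Nat.mod_unique _ _ a); lia. Qed.

Lemma div_bound m n i : (i < m * n)%nat -> (i / n < m)%nat.
Proof. intros. apply Nat.Div0.div_lt_upper_bound. lia. Qed.
Lemma mod_bound n i : (0 < n)%nat -> (i mod n < n)%nat.
Proof. intros. apply Nat.mod_upper_bound. lia. Qed.

Lemma divmod_eq n i j : (0 < n)%nat -> (i / n = j / n)%nat -> (i mod n = j mod n)%nat -> i = j.
Proof.
  intros Hn H1 H2. rewrite (Nat.div_mod i n), (Nat.div_mod j n) by lia. rewrite H1, H2. reflexivity.
Qed.

Lemma kron_mixed m n A B D E : (0 < n)%nat ->
  Mmul (m * n) (kron n A B) (kron n D E) = kron n (Mmul m A D) (Mmul n B E).
Proof.
  intros Hn.
  apply functional_extensionality; intro i; apply functional_extensionality; intro j.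
  unfold Mmul at 1. rewrite Csum_split. unfold kron at 3. unfold Mmul.
  rewrite <- Csum_mul_r. apply Csum_ext; intros a _. rewrite <- Csum_mul_l.
  apply Csum_ext; intros b Hb. unfold kron. rewrite divmod_div, divmod_mod by assumption.
  generalize (A (i / n)%nat a) (B (i mod n)%nat b) (D a (j / n)%nat) (E b (j mod n)%nat).
  Csolve.
Qed.

Lemma Madj_kron n A B : Madj (kron n A B) = kron n (Madj A) (Madj B).
Proof.
  apply functional_extensionality; intro i; apply functional_extensionality; intro j.
  unfold Madj, kron. apply Cconj_mul.
Qed.

Lemma kron_Meq m n A A' B B' : (0 < n)%nat -> Meq m A A' -> Meq n B B' ->
  Meq (m * n) (kron n A B) (kron n A' B').
Proof.
  intros Hn H1 H2 i j Hi Hj. unfold kron.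
  rewrite H1 by (apply div_bound; assumption).
  rewrite H2 by (apply mod_bound; assumption). reflexivity.
Qed.

Lemma kron_id n : (0 < n)%nat -> kron n Mid Mid = Mid.
Proof.
  intros Hn.
  apply functional_extensionality; intro i; apply functional_extensionality; intro j.
  unfold kron, Mid.
  destruct (Nat.eqb_spec i j).
  - subst. rewrite !Nat.eqb_refl. apply Cmul_1_l.
  - destruct (Nat.eqb_spec (i / n) (j / n)); destruct (Nat.eqb_spec (i mod n) (j mod n));
      try apply Cmul_0_l; try apply Cmul_0_r.
    exfalso. apply n0. apply (divmod_eq n); assumption.
Qed.

Lemma kron_diag n a b : (0 < n)%nat ->
  kron n (Mdiag a) (Mdiag b) = Mdiag (fun i => a (i / n)%nat * b (i mod n)%nat).
Proof.
  intros Hn.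
  apply functional_extensionality; intro i; apply functional_extensionality; intro j.
  unfold kron, Mdiag.
  destruct (Nat.eqb_spec i j).
  - subst. rewrite !Nat.eqb_refl. Csolve.
  - destruct (Nat.eqb_spec (i / n) (j / n)); destruct (Nat.eqb_spec (i mod n) (j mod n));
      try apply Cmul_0_l; try apply Cmul_0_r.
    exfalso. apply n0. apply (divmod_eq n); assumption.
Qed.

Lemma kron_unitary m n U V : (0 < n)%nat -> unitary m U -> unitary n V -> unitary (m * n) (kron n U V).
Proof.
  intros Hn [H1 H2] [H3 H4]. split.
  - rewrite Madj_kron, kron_mixed by assumption. rewrite <- (kron_id n Hn).
    apply kron_Meq; assumption.
  - rewrite Madj_kron, kron_mixed by assumption. rewrite <- (kron_id n Hn).
    apply kron_Meq; assumption.
Qed.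

Lemma kron_sdec m n A B U V lam mu : (0 < n)%nat -> sdec m A U lam -> sdec n B V mu ->
  sdec (m * n) (kron n A B) (kron n U V) (fun i => lam (i / n)%nat * mu (i mod n)%nat).
Proof.
  intros Hn [HU HA] [HV HB]. split.
  - apply kron_unitary; assumption.
  - rewrite <- kron_diag, Madj_kron, !kron_mixed by assumption.
    apply kron_Meq; assumption.
Qed.

Lemma sub_sdec n A U lam c : sdec n A U lam ->
  sdec n (Msub A (Mscale (RtoC c) Mid)) U (fun i => lam i - c).
Proof.
  intros [[HU1 HU2] HA]. split; [split; assumption|].
  intros i j Hi Hj. unfold Msub, Mscale. rewrite HA by assumption.
  rewrite !UDU_entry.
  rewrite (Csum_ext n (fun k => Cmul (Cmul (U i k) (RtoC (lam k - c))) (Cconj (U j k)))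
     (fun k => Cadd (Cmul (Cmul (U i k) (RtoC (lam k))) (Cconj (U j k)))
                    (Cmul (RtoC (- c)) (Cmul (U i k) (Cconj (U j k)))))).
  - rewrite Csum_add, Csum_mul_l. rewrite <- (HU2 i j Hi Hj). unfold Mmul, Madj.
    generalize (Csum n (fun k => Cmul (Cmul (U i k) (RtoC (lam k))) (Cconj (U j k))))
               (Csum n (fun k => Cmul (U i k) (Cconj (U j k)))). Csolve.
  - intros k _. generalize (U i k) (Cconj (U j k)). Csolve.
Qed.

Lemma sq_sdec n A U lam : sdec n A U lam -> sdec n (Mmul n A A) U (fun i => lam i * lam i).
Proof.
  intros [[HU1 HU2] HA]. split; [split; assumption|].
  eapply Meq_trans. apply Meq_mul; exact HA.
  rewrite !Mmul_assoc. apply Meq_mul_l.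
  eapply Meq_trans. apply Meq_mul_l. apply cancel_pair. exact HU1.
  rewrite <- Mmul_assoc. apply Meq_mul_r.
  intros i j Hi Hj. rewrite Mmul_diag_l by assumption. unfold Mdiag.
  destruct (Nat.eqb_spec i j).
  - subst. Csolve.
  - apply Cmul_0_r.
Qed.

Lemma density_eig n rho U lam : density n rho -> sdec n rho U lam ->
  (forall i, (i < n)%nat -> 0 <= lam i) /\ Rsum n lam = 1.
Proof.
  intros [_ [Hpos Htr]] [[HU1 HU2] HA]. split.
  - intros k Hk. specialize (Hpos (fun i => U i k)). simpl in Hpos.
    assert (E : Meq n (Mmul n (Mmul n (Madj U) rho) U) (Mdiag lam)).
    { eapply Meq_trans. apply Meq_mul_r. apply Meq_mul_l. exact HA.
      rewrite !Mmul_assoc. eapply Meq_trans. apply cancel_pair. exact HU1.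
      eapply Meq_trans. apply Meq_mul_l. exact HU1. apply Mmul_id_r. }
    specialize (E k k Hk Hk). unfold Mdiag in E. rewrite Nat.eqb_refl in E.
    change (lam k) with (Cre (RtoC (lam k))). rewrite <- E.
    replace (Mmul n (Mmul n (Madj U) rho) U k k) with
      (Csum n (fun i => Csum n (fun j => Cmul (Cconj (U i k)) (Cmul (rho i j) (U j k))))); [exact Hpos|].
    unfold Mmul, Madj. rewrite Csum_swap. apply Csum_ext; intros j _.
    rewrite <- Csum_mul_r. apply Csum_ext; intros i _. symmetry; apply Cmul_assoc.
  - rewrite (Mtrace_Meq _ _ _ HA) in Htr. apply (f_equal Cre) in Htr.
    rewrite trace_UDU in Htr by (split; assumption). rewrite Htr. reflexivity.
Qed.


Module MC.
Import ssreflect ssrfun ssrbool eqtype ssrnat seq choice fintype bigop ssralg zmodp ssrnum matrix mxalgebra sesquilinear spectral complex Rstruct.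
Import GRing.Theory Num.Theory.
Local Open Scope ring_scope.
Local Open Scope sesquilinear_scope.

Definition K := complex Rdefinitions.R.
Definition phi (a : Defs.C) : K := Complex (Cre a) (Cim a).
Definition psi (z : K) : Defs.C := mkC (complex.Re z) (complex.Im z).

Lemma phi_psi z : phi (psi z) = z. Proof. by case: z. Qed.
Lemma phi_inj a b : phi a = phi b -> a = b.
Proof. by case: a; case: b => ? ? ? ? [-> ->]. Qed.
Lemma phi_add a b : phi (Cadd a b) = phi a + phi b. Proof. reflexivity. Qed.
Lemma phi_mul a b : phi (Cmul a b) = phi a * phi b. Proof. reflexivity. Qed.
Lemma phi_conj a : phi (Cconj a) = (phi a)^*. Proof. reflexivity. Qed.
Lemma phi_C0 : phi C0 = 0. Proof. reflexivity. Qed.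
Lemma phi_C1 : phi C1 = 1. Proof. reflexivity. Qed.
Lemma phi_real r : phi (RtoC r) = Complex r 0. Proof. reflexivity. Qed.

Lemma phi_sum n f : phi (Csum n f) = \sum_(k < n) phi (f k).
Proof.
elim: n => [|n IH]; first by rewrite big_ord0 phi_C0.
by rewrite big_ord_recr /= phi_add IH.
Qed.

Lemma phi_Mid i j : phi (Mid i j) = (i == j)%:R.
Proof.
rewrite /Mid; case: (PeanoNat.Nat.eqb_spec i j) => [->|/eqP H].
  by rewrite eqxx phi_C1.
by rewrite (negbTE H) phi_C0.
Qed.

Lemma spectral_raw n (A : Mat) :
  (forall i j, (i < n)%coq_nat -> (j < n)%coq_nat -> Cconj (A j i) = A i j) ->
  exists (U : Mat) (lam : nat -> Rdefinitions.R),
   (forall i j, (i < n)%coq_nat -> (j < n)%coq_nat ->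
      Csum n (fun k => Cmul (Cconj (U k i)) (U k j)) = Mid i j) /\
   (forall i j, (i < n)%coq_nat -> (j < n)%coq_nat ->
      Csum n (fun k => Cmul (U i k) (Cconj (U j k))) = Mid i j) /\
   (forall i j, (i < n)%coq_nat -> (j < n)%coq_nat ->
      A i j = Csum n (fun k => Cmul (Cmul (U i k) (RtoC (lam k))) (Cconj (U j k)))).
Proof.
case: n => [|m] HA.
  by exists Mid, (fun _ => 0%R); split; [|split] => i j Hi; exfalso; lia.
pose M : 'M[K]_m.+1 := \matrix_(i, j) phi (A i j).
have Mh : M ^t* = M.
  apply/matrixP => i j; rewrite !mxE -phi_conj HA //; apply/ltP; exact: ltn_ord.
have Mherm : M \is hermsymmx.
  by apply/is_hermitianmxP; rewrite expr0 scale1r Mh.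
have /orthomx_spectralP HM := hermitian_normalmx Mherm.
have Hreal := hermitian_spectral_diag_real Mherm.
set P := spectralmx M in HM; set d := spectral_diag M in HM Hreal.
have Pu : P \is unitarymx by exact: spectral_unitarymx.
rewrite invmx_unitary // in HM.
have PPt : P *m P ^t* = 1%:M by apply/unitarymxP.
have PtP : P ^t* *m P = 1%:M.
  have := Pu; rewrite -trmxC_unitary => /unitarymxP; by rewrite trmxCK.
have dr (k : 'I_m.+1) : Complex (complex.Re (d 0 k)) 0 = d 0 k.
  have /mxOverP /(_ 0 k) /CrealP := Hreal.
  by case: (d 0 k) => a b /= [] /eqP; rewrite eq_sym -addr_eq0 -mulr2n mulrn_eq0 /= => /eqP ->.
pose U : Mat := fun i j => psi ((P (inord j) (inord i))^* ).
pose lam := fun k => complex.Re (d 0 (inord k)).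

exists U; exists lam.
have Hord (F : 'I_m.+1 -> K) : \sum_(k < m.+1) F (inord k) = \sum_(k < m.+1) F k.
  by apply: eq_bigr => k _; rewrite inord_val.
have Hinj i j : (i < m.+1)%coq_nat -> (j < m.+1)%coq_nat ->
   ((inord i : 'I_m.+1) == inord j) = (i == j).
  move=> /ltP Hi /ltP Hj; apply/eqP/eqP => [/(congr1 val)|->//].
  by rewrite /= !inordK.
split; [|split] => i j Hi Hj; apply: phi_inj.
- rewrite phi_sum phi_Mid -(Hinj _ _ Hi Hj).
  transitivity (\sum_(k < m.+1) P (inord i) k * (P (inord j) k)^* ).
    rewrite -Hord; apply: eq_bigr => k _.
    by rewrite phi_mul phi_conj !phi_psi ?conjCK ?inord_val.
  have /matrixP /(_ (inord i) (inord j)) := PPt; rewrite !mxE => <-; apply: eq_bigr => k _; by rewrite !mxE.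
- rewrite phi_sum phi_Mid -(Hinj _ _ Hi Hj).
  transitivity (\sum_(k < m.+1) (P k (inord i))^* * P k (inord j)).
    rewrite -Hord; apply: eq_bigr => k _.
    by rewrite phi_mul phi_conj !phi_psi ?conjCK ?inord_val.
  have /matrixP /(_ (inord i) (inord j)) := PtP; rewrite !mxE => <-; apply: eq_bigr => k _; by rewrite !mxE.
- rewrite phi_sum.
  have -> : phi (A i j) = M (inord i) (inord j).
    by rewrite mxE !inordK //; apply/ltP.
  rewrite HM -mulmxA mul_diag_mx mxE -Hord; apply: eq_bigr => k _.
  by rewrite !mxE !phi_mul phi_conj phi_real !phi_psi /lam !inord_val dr conjCK mulrA.
Qed.
End MC.


Lemma spectral_exists n A : Meq n (Madj A) A -> exists U lam, sdec n A U lam.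
Proof.
  intros H. destruct (MC.spectral_raw n A) as [U [lam [H1 [H2 H3]]]].
  - intros i j Hi Hj. apply (H i j Hi Hj).
  - exists U, lam. split; [split|].
    + intros i j Hi Hj. apply H1; assumption.
    + intros i j Hi Hj. apply H2; assumption.
    + intros i j Hi Hj. rewrite UDU_entry. apply H3; assumption.
Qed.

Fixpoint Lam (N : nat) (lam : nat -> R) (k : nat) : nat -> R :=
  match k with
  | O => fun _ => 1
  | S k' => fun i => Lam N lam k' (i / N)%nat * lam (i mod N)%nat
  end.

Lemma pow_S_r N k : (N ^ S k = N ^ k * N)%nat.
Proof. simpl. apply Nat.mul_comm. Qed.

Lemma tpow_sdec N rho U lam : (0 < N)%nat -> sdec N rho U lam ->
  forall k, exists W, sdec (N ^ k) (tpow N k rho) W (Lam N lam k).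
Proof.
  intros HN Hs. induction k as [|k [W HW]].
  - exists Mid. simpl. split; [split|];
      intros i j Hi Hj; assert (i = 0%nat) by lia; assert (j = 0%nat) by lia; subst;
      unfold Mmul, Madj, Mid, Mdiag; simpl; Csolve.
  - exists (kron N W U). rewrite pow_S_r. simpl tpow.
    apply (kron_sdec (N ^ k) N _ _ W U (Lam N lam k) lam); assumption.
Qed.

Section LamProps.
Variables (N : nat) (lam : nat -> R).
Hypothesis HN : (0 < N)%nat.
Hypothesis Hl0 : forall i, (i < N)%nat -> 0 <= lam i.
Hypothesis Hl1 : Rsum N lam = 1.

Lemma Lam_nonneg k i : (i < N ^ k)%nat -> 0 <= Lam N lam k i.
Proof.
  revert i; induction k; intros i Hi; simpl; [lra|].
  apply Rmult_le_pos.
  - apply IHk. apply div_bound. rewrite <- pow_S_r. assumption.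
  - apply Hl0. apply mod_bound. assumption.
Qed.

Lemma Rsum_pow_S k f :
  Rsum (N ^ S k) f = Rsum (N ^ k) (fun a => Rsum N (fun b => f (a * N + b)%nat)).
Proof. rewrite pow_S_r. apply Rsum_split. Qed.

Lemma Lam_sum k : Rsum (N ^ k) (Lam N lam k) = 1.
Proof.
  induction k; [simpl; ring|].
  rewrite Rsum_pow_S. rewrite <- IHk. apply Rsum_ext; intros a Ha.
  rewrite (Rsum_ext N _ (fun b => Lam N lam k a * lam b)).
  - rewrite Rsum_scal_l, Hl1. ring.
  - intros b Hb. simpl. rewrite divmod_div, divmod_mod by assumption. reflexivity.
Qed.

Lemma eta_0 : eta 0 = 0.
Proof. unfold eta. destruct (Req_EM_T 0 0); [reflexivity|congruence]. Qed.

Lemma eta_mul x y : 0 <= x -> 0 <= y -> eta (x * y) = x * eta y + y * eta x.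
Proof.
  intros Hx Hy.
  destruct (Req_dec x 0) as [->|Hx0]. { rewrite Rmult_0_l, eta_0. ring. }
  destruct (Req_dec y 0) as [->|Hy0]. { rewrite Rmult_0_r, eta_0. ring. }
  assert (Hxy : x * y <> 0) by (apply Rmult_integral_contrapositive; tauto).
  unfold eta. destruct (Req_EM_T (x*y) 0); [contradiction|].
  destruct (Req_EM_T x 0); [contradiction|]. destruct (Req_EM_T y 0); [contradiction|].
  unfold log2. rewrite ln_mult by lra. unfold Rdiv. ring.
Qed.

Lemma Lam_entropy k :
  Rsum (N ^ k) (fun i => eta (Lam N lam k i)) = INR k * Rsum N (fun i => eta (lam i)).
Proof.
  induction k.
  - simpl. unfold eta. destruct (Req_EM_T 1 0); [lra|]. unfold log2. rewrite ln_1. unfold Rdiv. ring.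
  - rewrite Rsum_pow_S, S_INR.
    rewrite (Rsum_ext (N ^ k) _ (fun a => Lam N lam k a * Rsum N (fun i => eta (lam i)) + eta (Lam N lam k a))).
    + rewrite Rsum_add, Rsum_scal_r, Lam_sum, IHk. ring.
    + intros a Ha.
      rewrite (Rsum_ext N _ (fun b => Lam N lam k a * eta (lam b) + lam b * eta (Lam N lam k a))).
      * rewrite Rsum_add, Rsum_scal_l, Rsum_scal_r, Hl1. ring.
      * intros b Hb. simpl. rewrite divmod_div, divmod_mod by assumption.
        apply eta_mul; [apply Lam_nonneg; assumption|apply Hl0; assumption].
Qed.

Lemma INR_pow_pos k : 0 < INR (N ^ k).
Proof. apply lt_0_INR. apply Nat.neq_0_lt_0. apply Nat.pow_nonzero. lia. Qed.

Lemma abs_prod_bound x y c d : 0 <= y -> 0 <= c ->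
  Rabs (x * y - c * d) <= Rabs (x - c) * y + c * Rabs (y - d).
Proof.
  intros Hy Hc.
  replace (x * y - c * d) with ((x - c) * y + c * (y - d)) by ring.
  eapply Rle_trans; [apply Rabs_triang|].
  rewrite !Rabs_mult, (Rabs_right y), (Rabs_right c) by lra. lra.
Qed.

Lemma Lam_dist k :
  Rsum (N ^ k) (fun i => Rabs (Lam N lam k i - / INR (N ^ k)))
  <= INR k * Rsum N (fun i => Rabs (lam i - / INR N)).
Proof.
  induction k.
  - simpl. rewrite Rinv_1. replace (1 - 1) with 0 by ring. rewrite Rabs_R0. lra.
  - rewrite Rsum_pow_S, S_INR.
    set (c := / INR (N ^ k)). set (D1 := Rsum N (fun i => Rabs (lam i - / INR N))).
    assert (Hc : 0 < c) by (apply Rinv_0_lt_compat; apply INR_pow_pos).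
    assert (HS : / INR (N ^ S k) = c * / INR N).
    { rewrite pow_S_r, mult_INR. unfold c. rewrite Rinv_mult. reflexivity. }
    rewrite HS.
    apply Rle_trans with (Rsum (N ^ k) (fun a => Rabs (Lam N lam k a - c) + c * D1)).
    + apply Rsum_le; intros a Ha.
      apply Rle_trans with (Rsum N (fun b => Rabs (Lam N lam k a - c) * lam b + c * Rabs (lam b - / INR N))).
      * apply Rsum_le; intros b Hb. simpl. rewrite divmod_div, divmod_mod by assumption.
        apply abs_prod_bound; [apply Hl0; assumption| lra].
      * rewrite Rsum_add, Rsum_scal_l, Rsum_scal_l, Hl1. unfold D1. lra.
    + rewrite Rsum_add, Rsum_const. unfold c in *.
      replace (INR (N ^ k) * (/ INR (N ^ k) * D1)) with D1
        by (field; apply Rgt_not_eq; apply INR_pow_pos).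
      fold D1 in IHk. lra.
Qed.

End LamProps.


Lemma eta_nonneg x : 0 <= x <= 1 -> 0 <= eta x.
Proof.
  intros [H0 H1]. unfold eta. destruct (Req_EM_T x 0); [lra|].
  assert (Hx : 0 < x) by lra.
  assert (Hl : ln x <= 0).
  { destruct (Req_dec x 1) as [->|]; [rewrite ln_1; lra|]. rewrite <- ln_1. left. apply ln_increasing; lra. }
  assert (H2 : 0 < ln 2) by (rewrite <- ln_1; apply ln_increasing; lra).
  unfold log2, Rdiv.
  assert (0 < / ln 2) by (apply Rinv_0_lt_compat; lra).
  assert (ln x * / ln 2 <= 0) by nra. nra.
Qed.

Lemma dist_formula n A U lam : sdec n A U lam ->
  trace_dist n A (maxmixed n) = / 2 * Rsum n (fun i => Rabs (lam i - / INR n)).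
Proof.
  intros Hs. unfold trace_dist, maxmixed.
  rewrite (mfun_trace n sqrt _ U (fun i => (lam i - / INR n) * (lam i - / INR n))).
  - f_equal. apply Rsum_ext; intros i _. apply sqrt_Rsqr_abs.
  - apply sq_sdec. apply sub_sdec. assumption.
Qed.

Theorem mainTheorem3 (N n : nat) (rho : Mat) :
  (2 <= N)%nat -> (1 <= n)%nat -> density N rho ->
  QSCM (N ^ n) (tpow N n rho) <= INR n * QSCM N rho.
Proof.
  intros HN Hn Hd.
  assert (HN0 : (0 < N)%nat) by lia.
  destruct (spectral_exists N rho (proj1 Hd)) as [U [lam Hs]].
  destruct (density_eig N rho U lam Hd Hs) as [Hl0 Hl1].
  destruct (tpow_sdec N rho U lam HN0 Hs n) as [W HW].
  unfold QSCM, vN_entropy.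
  rewrite (mfun_trace _ _ _ _ _ Hs), (mfun_trace _ _ _ _ _ HW).
  rewrite (dist_formula _ _ _ _ Hs), (dist_formula _ _ _ _ HW).
  rewrite (Lam_entropy N lam HN0 Hl0 Hl1 n).
  pose proof (Lam_dist N lam HN0 Hl0 Hl1 n) as HD.
  set (S1 := Rsum N (fun i => eta (lam i))) in *.
  set (D1 := Rsum N (fun i => Rabs (lam i - / INR N))) in *.
  set (Dn := Rsum (N ^ n) (fun i => Rabs (Lam N lam n i - / INR (N ^ n)))) in *.
  assert (HS1 : 0 <= S1).
  { apply Rsum_nonneg; intros i Hi. apply eta_nonneg. split; [apply Hl0; assumption|].
    rewrite <- Hl1. apply Rsum_term; assumption. }
  assert (HL : 0 < log2 (INR N)).
  { unfold log2. assert (0 < ln 2) by (rewrite <- ln_1; apply ln_increasing; lra).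
    assert (0 < ln (INR N)).
    { rewrite <- ln_1; apply ln_increasing; [lra|]. apply lt_1_INR. lia. }
    unfold Rdiv. apply Rmult_lt_0_compat; [assumption|]. apply Rinv_0_lt_compat; assumption. }
  assert (HLn : log2 (INR (N ^ n)) = INR n * log2 (INR N)).
  { unfold log2. rewrite pow_INR, ln_pow by (apply lt_0_INR; lia). unfold Rdiv. ring. }
  rewrite HLn.
  assert (Hnpos : 0 < INR n) by (apply lt_0_INR; lia).
  set (L := log2 (INR N)) in *.
  replace (/ (INR n * L) * (INR n * S1) * (/ 2 * Dn)) with (/ L * S1 * / 2 * Dn)
    by (field; split; lra).
  replace (INR n * (/ L * S1 * (/ 2 * D1))) with (/ L * S1 * / 2 * (INR n * D1)) by ring.
  apply Rmult_le_compat_l; [|exact HD].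
  assert (0 < / L) by (apply Rinv_0_lt_compat; lra).
  apply Rmult_le_pos; [|lra]. apply Rmult_le_pos; lra.
Qed.
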